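(* Let $(R,\mathfrak{m},k)$ be a Noetherian local ring and let $\varphi$ be a finite local self-map of $R$. Then the sequence $\{(\log\nu(\varphi^n_*R))/n\}_{n\ge1}$ converges to its infimum $\nu_\infty$, and $$\nu_\infty=\log[\varphi_*k:k]+h_{\mathrm{alg}}(\varphi,R).$$
   Context: A self-map is a ring endomorphism; $\varphi^n$ is the $n$-fold composition; ''finite'' means $R$ is finitely generated as a module via $\varphi$. $\varphi^n_*R$ is $R$ viewed as an $R$-module via $\varphi^n$ (restriction of scalars), and $\nu(M)$ is the minimal number of generators of a finite module $M$. $[\varphi_*k:k]$ is the $k$-dimension of $k$ viewed as a $k$-vector space via $\varphi$. For a local self-map $\psi$ with $\psi(\mathfrak{m})R$ $\mathfrak{m}$-primary, $\lambda(\psi):=\ell_R(R/\psi(\mathfrak{m})R)$, and the algebraic entropy is $h_{\mathrm{alg}}(\varphi,R):=\lim_{n\to\infty}\frac{1}{n}\log\lambda(\varphi^n)$ (this limit exists for any such self-map; finite local self-maps have this property). *)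

(* Defs.v *)
From HB Require Import structures.
From mathcomp Require Import all_boot all_order all_algebra.
From Stdlib Require Import Reals ClassicalEpsilon.

Set Implicit Arguments.
Unset Strict Implicit.
Unset Printing Implicit Defensive.

Import GRing.Theory.

Section Defs.
Variable A : comUnitRingType.
Local Open Scope ring_scope.

Definition is_ideal (I : A -> Prop) : Prop :=
  I 0 /\ (forall x y, I x -> I y -> I (x + y)) /\ (forall r x, I x -> I (r * x)).

Definition ideal_gen (s : seq A) (x : A) : Prop :=
  exists c : nat -> A, x = \sum_(i < size s) c i * s`_i.

Definition noetherian : Prop :=
  forall I : A -> Prop, is_ideal I ->
    exists s : seq A, forall x, I x <-> ideal_gen s x.

Definition local_max (m : A -> Prop) : Prop :=
  is_ideal m /\ ~ m 1 /\ (forall x, ~ m x -> x \is a GRing.unit).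

Definition local_map (m : A -> Prop) (f : A -> A) : Prop :=
  forall x, m x -> m (f x).

(* s generates f_* A as an A-module (A acting through f) *)
Definition gens_via (f : A -> A) (s : seq A) : Prop :=
  forall x : A, exists c : nat -> A, x = \sum_(i < size s) f (c i) * s`_i.

Definition finite_map (f : A -> A) : Prop := exists s, gens_via f s.

Definition is_nu (f : A -> A) (n : nat) : Prop :=
  (exists s, size s = n /\ gens_via f s) /\
  (forall s, gens_via f s -> leq n (size s)).

Definition nu (f : A -> A) : nat :=
  epsilon (inhabits O) (is_nu f).

(* s spans k = A/m as a k-vector space with k acting through f *)
Definition res_spans (m : A -> Prop) (f : A -> A) (s : seq A) : Prop :=
  forall x : A, exists c : nat -> A,
    m (x - \sum_(i < size s) f (c i) * s`_i).

(* n = [f_* k : k], the dimension = minimal size of a spanning set *)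
Definition is_res_deg (m : A -> Prop) (f : A -> A) (n : nat) : Prop :=
  (exists s, size s = n /\ res_spans m f s) /\
  (forall s, res_spans m f s -> leq n (size s)).

Definition res_deg (m : A -> Prop) (f : A -> A) : nat :=
  epsilon (inhabits O) (is_res_deg m f).

Definition ext_ideal (m : A -> Prop) (f : A -> A) (x : A) : Prop :=
  exists (n : nat) (r y : nat -> A),
    (forall i, m (y i)) /\ x = \sum_(i < n) r i * f (y i).

(* a strict chain of ideals I = J 0 < J 1 < ... < J n = A;
   these are exactly the chains of submodules of A/I *)
Definition ideal_chain (I : A -> Prop) (J : nat -> A -> Prop) (n : nat) : Prop :=
  (forall i, is_ideal (J i)) /\
  (forall x, J O x <-> I x) /\
  (forall x, J n x) /\
  (forall i, leq i.+1 n ->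
     (forall x, J i x -> J i.+1 x) /\ exists x, J i.+1 x /\ ~ J i x).

Definition is_length_quot (I : A -> Prop) (n : nat) : Prop :=
  (exists J, ideal_chain I J n) /\
  (forall J k, ideal_chain I J k -> leq k n).

Definition length_quot (I : A -> Prop) : nat :=
  epsilon (inhabits O) (is_length_quot I).

Definition lambda (m : A -> Prop) (f : A -> A) : nat :=
  length_quot (ext_ideal m f).

End Defs.

(* Main.v *)
Require Import Defs.
From HB Require Import structures.
From mathcomp Require Import all_boot all_order all_algebra.
From Stdlib Require Import Reals.
From Stdlib Require Import ClassicalEpsilon Classical Lra Lia.
From Stdlib Require Znat.
From mathcomp Require Import zify.
From mathcomp Require algebra_tactics.ring.

Module H1.
Import mathcomp.algebra_tactics.ring.
Set Implicit Arguments.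
Unset Strict Implicit.
Unset Printing Implicit Defensive.
Import GRing.Theory.
Local Open Scope ring_scope.


Section Alg.
Variable A : comUnitRingType.

Definition rmap (f : A -> A) :=
  (forall x y, f (x + y) = f x + f y) /\ (forall x y, f (x * y) = f x * f y) /\ f 1 = 1.

Lemma rmap0 f : rmap f -> f 0 = 0.
Proof. move=> [fD _]. have := fD 0 0. rewrite addr0 => /eqP. by rewrite -subr_eq subrr eq_sym => /eqP. Qed.

Lemma rmapN f : rmap f -> forall x, f (- x) = - f x.
Proof. move=> hf x; have [fD _] := hf. apply/eqP; rewrite -subr_eq0 opprK -fD addNr. by rewrite rmap0. Qed.

Lemma rmap_sum f n (F : nat -> A) : rmap f -> f (\sum_(i < n) F i) = \sum_(i < n) f (F i).
Proof.
move=> hf; have [fD _] := hf; elim: n => [|n IH]; first by rewrite !big_ord0 rmap0.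
by rewrite !big_ord_recr /= fD IH.
Qed.

Lemma rmap_unit f x : rmap f -> x \is a GRing.unit -> f x \is a GRing.unit.
Proof.
move=> [_ [fM f1]] ux; apply/unitrP; exists (f x^-1).
by rewrite -!fM mulVr // mulrV // f1.
Qed.

Lemma rmap_comp g h : rmap g -> rmap h -> rmap (fun x => g (h x)).
Proof.
move=> [gD [gM g1]] [hD [hM h1]]; split; [|split].
- by move=> x y; rewrite hD gD.
- by move=> x y; rewrite hM gM.
- by rewrite h1 g1.
Qed.

Lemma rmap_iter (phi : {rmorphism A -> A}) n : rmap (iter n phi).
Proof.
elim: n => [|n [fD [fM f1]]]; first by split => //=.
split; [|split] => /=.
- by move=> x y; rewrite fD rmorphD.
- by move=> x y; rewrite fM rmorphM.
- by rewrite f1 rmorph1.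
Qed.

Variable m : A -> Prop.
Hypothesis Hm : local_max m.

Lemma m0 : m 0. Proof. by case: Hm => [[]]. Qed.
Lemma mD x y : m x -> m y -> m (x + y). Proof. by case: Hm => [[_ [H _]] _]; apply: H. Qed.
Lemma mMl r x : m x -> m (r * x). Proof. by case: Hm => [[_ [_ H]] _]; apply: H. Qed.
Lemma mMr r x : m x -> m (x * r). Proof. by rewrite mulrC; apply: mMl. Qed.
Lemma mN x : m x -> m (- x). Proof. by move=> h; rewrite -mulN1r; apply: mMl. Qed.
Lemma mB x y : m x -> m y -> m (x - y). Proof. by move=> hx hy; apply: mD => //; apply: mN. Qed.
Lemma m1 : ~ m 1. Proof. by case: Hm => [_ []]. Qed.
Lemma m_unit x : ~ m x -> x \is a GRing.unit. Proof. by case: Hm => [_ [_ H]]; apply: H. Qed.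
Lemma unit_m x : x \is a GRing.unit -> ~ m x.
Proof. by move=> ux hx; apply: m1; rewrite -(mulVr ux); apply: mMl. Qed.
Lemma m_sum n (F : nat -> A) : (forall i, (i < n)%nat -> m (F i)) -> m (\sum_(i < n) F i).
Proof.
elim: n => [|n IH] H; first by rewrite big_ord0; apply: m0.
rewrite big_ord_recr /=; apply: mD; last exact: H.
by apply: IH => i hi; apply: H; apply: ltnW.
Qed.

Lemma id0 (J : A -> Prop) : is_ideal J -> J 0. Proof. by case. Qed.
Lemma idD (J : A -> Prop) x y : is_ideal J -> J x -> J y -> J (x + y).
Proof. by case=> [_ [H _]]; apply: H. Qed.
Lemma idMl (J : A -> Prop) r x : is_ideal J -> J x -> J (r * x).
Proof. by case=> [_ [_ H]]; apply: H. Qed.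
Lemma idMr (J : A -> Prop) r x : is_ideal J -> J x -> J (x * r).
Proof. by move=> hJ; rewrite mulrC; apply: idMl. Qed.
Lemma idN (J : A -> Prop) x : is_ideal J -> J x -> J (- x).
Proof. by move=> hJ h; rewrite -mulN1r; apply: idMl. Qed.
Lemma idB (J : A -> Prop) x y : is_ideal J -> J x -> J y -> J (x - y).
Proof. by move=> hJ hx hy; apply: idD => //; apply: idN. Qed.
Lemma id_sum (J : A -> Prop) n (F : nat -> A) : is_ideal J ->
  (forall i, (i < n)%nat -> J (F i)) -> J (\sum_(i < n) F i).
Proof.
move=> hJ; elim: n => [|n IH] H; first by rewrite big_ord0; apply: id0.
rewrite big_ord_recr /=; apply: idD => //; last exact: H.
by apply: IH => i hi; apply: H; apply: ltnW.
Qed.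

Lemma m_ideal : is_ideal m. Proof. by case: Hm. Qed.
Definition zero_id (x : A) : Prop := x = 0.
Lemma zero_ideal : is_ideal zero_id.
Proof. rewrite /zero_id; split; [done|split] => [x y -> ->|r x ->]; by rewrite ?addr0 ?mulr0. Qed.

End Alg.



Section Span.
Variable A : comUnitRingType.

Definition span (f : A -> A) (J : A -> Prop) (s : seq A) (x : A) : Prop :=
  exists c : nat -> A, J (x - \sum_(i < size s) f (c i) * s`_i).

Variables (f : A -> A) (J : A -> Prop).
Hypotheses (hf : rmap f) (hJ : is_ideal J).

Lemma span_J s x : J x -> span f J s x.
Proof.
move=> Jx; exists (fun _ => 0).
have -> : \sum_(i < size s) f 0 * s`_i = 0.
  by apply: big1 => i _; rewrite (rmap0 hf) mul0r.
by rewrite subr0.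
Qed.

Lemma span_add s x y : span f J s x -> span f J s y -> span f J s (x + y).
Proof.
move=> [c hc] [c' hc']; exists (fun i => c i + c' i).
have -> : \sum_(i < size s) f (c i + c' i) * s`_i =
   \sum_(i < size s) f (c i) * s`_i + \sum_(i < size s) f (c' i) * s`_i.
  by rewrite -big_split /=; apply: eq_bigr => i _; case: hf => fD _; rewrite fD mulrDl.
have -> : x + y - (\sum_(i < size s) f (c i) * s`_i + \sum_(i < size s) f (c' i) * s`_i)
  = (x - \sum_(i < size s) f (c i) * s`_i) + (y - \sum_(i < size s) f (c' i) * s`_i).
  by rewrite opprD addrACA.
exact: idD.
Qed.

Lemma span_scale s a x : span f J s x -> span f J s (f a * x).
Proof.
move=> [c hc]; exists (fun i => a * c i).
have -> : f a * x - \sum_(i < size s) f (a * c i) * s`_i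
   = f a * (x - \sum_(i < size s) f (c i) * s`_i).
  rewrite mulrBr mulr_sumr; congr (_ - _); apply: eq_bigr => i _.
  by case: hf => _ [fM _]; rewrite fM mulrA.
exact: idMl.
Qed.

Lemma span_nth s i : (i < size s)%nat -> span f J s s`_i.
Proof.
move=> hi; exists (fun k => if k == i then 1 else 0).
rewrite (bigD1 (Ordinal hi)) //= eqxx.
have -> : \sum_(k < size s | k != Ordinal hi) f (if (k:nat) == i then 1 else 0) * s`_k = 0.
  apply: big1 => k hk; have -> : ((k:nat) == i) = false.
    by apply/negbTE; move: hk; apply: contra => /eqP h; apply/eqP/val_inj.
  by rewrite (rmap0 hf) mul0r.
by case: hf => _ [_ f1]; rewrite f1 mul1r addr0 subrr; exact: (id0 hJ).
Qed.

Lemma span_sum s n (F : nat -> A) :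
  (forall i, (i < n)%nat -> span f J s (F i)) -> span f J s (\sum_(i < n) F i).
Proof.
elim: n => [|n IH] H; first by rewrite big_ord0; apply: span_J; exact: (id0 hJ).
rewrite big_ord_recr /=; apply: span_add; last exact: H.
by apply: IH => i hi; apply: H; apply: ltnW.
Qed.

Lemma span_lin s n (c : nat -> A) (t : nat -> A) :
  (forall i, (i < n)%nat -> span f J s (t i)) -> span f J s (\sum_(i < n) f (c i) * t i).
Proof. by move=> H; apply: (@span_sum s n (fun i => f (c i) * t i)) => i hi; apply: span_scale; apply: H. Qed.

Lemma span_trans s t x : (forall i, (i < size t)%nat -> span f J s t`_i) ->
  span f J t x -> span f J s x.
Proof.
move=> H [c hc].
have -> : x = (x - \sum_(i < size t) f (c i) * t`_i) + \sum_(i < size t) f (c i) * t`_i.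
  by rewrite subrK.
by apply: span_add; [apply: span_J | apply: span_lin].
Qed.

Lemma span_sub s x y : span f J s x -> span f J s y -> span f J s (x - y).
Proof.
move=> hx hy; apply: span_add => //; rewrite -mulN1r.
have <- : f (-1) = -1 by rewrite (rmapN hf); case: hf => _ [_ ->].
exact: span_scale.
Qed.

End Span.

Lemma span_ext (A : comUnitRingType) (f g : A -> A) J s x :
  (forall y, f y = g y) -> span f J s x -> span g J s x.
Proof.
move=> e [c hc]; exists c.
suff -> : (\sum_(i < size s) g (c i) * s`_i = \sum_(i < size s) f (c i) * s`_i)%R by [].
by apply: eq_bigr => i _; rewrite e.
Qed.

Lemma span_mono (A : comUnitRingType) (f : A -> A) (J K : A -> Prop) s x :
  (forall y, J y -> K y) -> span f J s x -> span f K s x.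
Proof. by move=> h [c hc]; exists c; apply: h. Qed.

Lemma sum_divmod (A : comUnitRingType) p q (H : nat -> A) :
  (\sum_(k < p * q) H k = \sum_(i < p) \sum_(j < q) H (i * q + j)%nat)%R.
Proof.
elim: p H => [|p IH] H; first by rewrite mul0n !big_ord0.
rewrite mulSn big_split_ord /= big_ord_recl /= (IH (fun k => H (q + k)%nat)).
f_equal.

apply: eq_bigr => i _; apply: eq_bigr => j _.
by rewrite /bump /= add1n mulSn addnA.
Qed.

Definition blk (A : Type) (p q : nat) (G : nat -> nat -> A) : seq A :=
  mkseq (fun k => G (k %/ q)%nat (k %% q)%nat) (p * q).

Lemma size_blk (A : Type) p q (G : nat -> nat -> A) : size (blk p q G) = (p * q)%nat.
Proof. by rewrite size_mkseq. Qed.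

Lemma divmod_ij (q i j : nat) : (j < q)%nat -> ((i * q + j) %/ q = i)%nat /\ ((i * q + j) %% q = j)%nat.
Proof.
move=> hj; have q0 : (0 < q)%nat by apply: leq_ltn_trans hj.
split; first by rewrite divnMDl // divn_small // addn0.
by rewrite modnMDl modn_small.
Qed.

Lemma ij_lt (p q i j : nat) : (i < p)%nat -> (j < q)%nat -> (i * q + j < p * q)%nat.
Proof. move=> hi hj; nia. Qed.

Lemma nth_blk (A : comUnitRingType) p q (G : nat -> nat -> A) i j :
  (i < p)%nat -> (j < q)%nat -> (blk p q G)`_(i * q + j) = G i j.
Proof.
move=> hi hj; rewrite nth_mkseq; last exact: ij_lt.
by have [-> ->] := divmod_ij i hj.
Qed.

Lemma sum_blk (A : comUnitRingType) p q (G : nat -> nat -> A) (F : nat -> A) :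
  \sum_(k < size (blk p q G)) F k * (blk p q G)`_k
  = \sum_(i < p) \sum_(j < q) F (i * q + j)%nat * G i j.
Proof.
rewrite size_blk (sum_divmod p q (fun k => F k * (blk p q G)`_k)); apply: eq_bigr => i _; apply: eq_bigr => j _.
by rewrite nth_blk.
Qed.

Lemma blk_split (p q k : nat) : (k < p * q)%nat -> (k %/ q < p)%nat /\ (k %% q < q)%nat /\ k = (k %/ q * q + k %% q)%nat.
Proof.
move=> hk; have q0 : (0 < q)%nat by case: q hk => //; rewrite muln0.
split; first by rewrite ltn_divLR.
by split; [rewrite ltn_mod | rewrite -divn_eq].
Qed.



Section Prod.
Variable A : comUnitRingType.

Lemma prod_span (g h : A -> A) (J : A -> Prop) (t s : seq A) :
  rmap g -> rmap h -> is_ideal J -> (forall y a, J y -> J (g y * a)) ->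
  (forall x, span g J t x) -> (forall x, span h J s x) ->
  forall x, span (fun y => g (h y)) J (blk (size t) (size s) (fun i j => g s`_j * t`_i)) x.
Proof.
move=> hg hh hJ hJg Ht Hs x.
have hgh := rmap_comp hg hh.
have [c hc] := Ht x.
rewrite -(subrK (\sum_(i < size t) g (c i) * t`_i) x).
apply: span_add => //; first exact: span_J.
apply: (@span_sum _ _ _ hgh hJ _ (size t) (fun i => g (c i) * t`_i)) => i hi.
have [d hd] := Hs (c i).
have -> : g (c i) * t`_i = g (c i - \sum_(j < size s) h (d j) * s`_j) * t`_i
   + \sum_(j < size s) g (h (d j)) * (blk (size t) (size s) (fun i j => g s`_j * t`_i))`_(i * size s + j).
  have [gD [gM _]] := hg.
  have -> : \sum_(j < size s) g (h (d j)) * (blk (size t) (size s) (fun i j => g s`_j * t`_i))`_(i * size s + j)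
     = g (\sum_(j < size s) h (d j) * s`_j) * t`_i.
    rewrite (@rmap_sum _ g (size s) (fun j => h (d j) * s`_j) hg) mulr_suml; apply: eq_bigr => j _.
    by rewrite nth_blk // gM mulrA.
  by rewrite -mulrDl -gD subrK.
apply: span_add => //; first by apply: span_J => //; apply: hJg.
apply: (@span_sum _ _ _ hgh hJ _ (size s) (fun j => g (h (d j)) * (blk (size t) (size s) (fun i j => g s`_j * t`_i))`_(i * size s + j))) => j hj.
apply: span_scale => //; apply: span_nth => //.
by rewrite size_blk; apply: ij_lt.
Qed.


Definition indep (m : A -> Prop) (f : A -> A) (J : A -> Prop) (s : seq A) :=
  forall c : nat -> A, J (\sum_(i < size s) f (c i) * s`_i) -> forall i, (i < size s)%nat -> m (c i).

Lemma prod_indep (m : A -> Prop) (g h : A -> A) (t s : seq A) :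
  rmap g -> rmap h -> indep m g m t -> indep m h m s ->
  indep m (fun y => g (h y)) m (blk (size t) (size s) (fun i j => g s`_j * t`_i)).
Proof.
move=> hg hh It Is c H k hk.
rewrite size_blk in hk; have [hi [hj ->]] := blk_split hk.
move: H; rewrite (@sum_blk _ (size t) (size s) _ (fun k => g (h (c k)))) /=.
have [gD [gM _]] := hg.
have -> : \sum_(i < size t) \sum_(j < size s) g (h (c (i * size s + j)%nat)) * (g s`_j * t`_i)
   = \sum_(i < size t) g (\sum_(j < size s) h (c (i * size s + j)%nat) * s`_j) * t`_i.
  apply: eq_bigr => i _.
  rewrite (@rmap_sum _ g (size s) (fun j => h (c (i * size s + j)%nat) * s`_j) hg) mulr_suml.
  by apply: eq_bigr => j _; rewrite gM mulrA.
move=> H; have := It (fun i => \sum_(j < size s) h (c (i * size s + j)%nat) * s`_j) H _ hi.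
by move=> H2; apply: (Is (fun j => c (k %/ size s * size s + j)%nat) H2).
Qed.

End Prod.



Section Loc.
Variable A : comUnitRingType.
Variable m : A -> Prop.
Hypothesis Hm : local_max m.

Lemma nak_core (f : A -> A) (P : A -> Prop) : rmap f -> P 0 ->
  (forall x y, P x -> P y -> P (x + y)) -> (forall a x, P x -> P (f a * x)) ->
  forall r (g : nat -> A),
  (forall i, (i < r)%nat -> exists S (c : nat -> A), P S /\ (forall l, m (c l)) /\
       g i = S + \sum_(l < r) f (c l) * g l) ->
  forall i, (i < r)%nat -> P (g i).
Proof.
move=> hf P0 PD PM.
have [fD [fM f1]] := hf.
have Psum : forall n (F : nat -> A), (forall i, (i < n)%nat -> P (F i)) -> P (\sum_(i < n) F i).
  elim=> [|n IH] F H; first by rewrite big_ord0.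
  rewrite big_ord_recr /=; apply: PD; last exact: H.
  by apply: IH => i hi; apply: H; apply: ltnW.
elim=> [|r IH] g H; first by [].
have [S [c [PS [mc hr]]]] := H r (ltnSn r).
rewrite big_ord_recr /= in hr.
pose u := 1 - c r.
have uu : u \is a GRing.unit.
  apply: (m_unit Hm) => mu; apply: (m1 Hm).
  by rewrite -(subrK (c r) 1); apply: (mD Hm).
have fuu : f u^-1 * f u = 1 by rewrite -fM mulVr.
pose S' := f u^-1 * S.
pose c' := fun l => u^-1 * c l.
have hr' : g r = S' + \sum_(l < r) f (c' l) * g l.
  have e1 : \sum_(l < r) f (c' l) * g l = f u^-1 * \sum_(l < r) f (c l) * g l.
    by rewrite mulr_sumr; apply: eq_bigr => l _; rewrite /c' fM mulrA.
  have e2 : f u = 1 - f (c r) by rewrite /u fD f1 (rmapN hf).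
  rewrite e1 /S' -mulrDr.
  have e3 : S + \sum_(l < r) f (c l) * g l = f u * g r.
    by rewrite e2 mulrBl mul1r {1}hr; ring.
  by rewrite e3 mulrA fuu mul1r.
have Hlt : forall i, (i < r)%nat -> P (g i).
  apply: IH => i hi.
  have [Si [ci [PSi [mci hi']]]] := H i (ltnW hi).
  rewrite big_ord_recr /= in hi'.
  exists (Si + f (ci r) * S'), (fun l => ci l + ci r * c' l).
  split. apply: PD. exact: PSi. apply: (PM (ci r)). apply: PM. exact: PS.
  split; first by move=> l; apply: (mD Hm) => //; apply: (mMr Hm).
  have e4 : \sum_(l < r) f (ci l + ci r * c' l) * g l =
     \sum_(l < r) f (ci l) * g l + f (ci r) * \sum_(l < r) f (c' l) * g l.
    rewrite mulr_sumr -big_split /=; apply: eq_bigr => l _.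
    by rewrite fD fM mulrDl mulrA.
  rewrite e4 hi' {1}hr'; ring.
move=> i; rewrite ltnS leq_eqVlt => /orP [/eqP -> | hi]; last exact: Hlt.
rewrite hr'; apply: PD; first by apply: PM.
by apply: (Psum r (fun l => f (c' l) * g l)) => l hl; apply: PM; apply: Hlt.
Qed.


Lemma gens_span (f : A -> A) s : gens_via f s <-> forall x, span f (@zero_id A) s x.
Proof.
split=> H x; have [c hc] := H x; exists c.
  by rewrite /zero_id hc subrr.
by apply/eqP; rewrite -subr_eq0; apply/eqP.
Qed.

Lemma nakayama (f : A -> A) : rmap f -> (exists g, forall x, span f (@zero_id A) g x) ->
  forall s, (forall x, span f (ext_ideal m f) s x) -> forall x, span f (@zero_id A) s x.
Proof.
move=> hf [g Hg] s Hs.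
have [fD [fM f1]] := hf.
have hZ := @zero_ideal A.
have key := @nak_core f (span f (@zero_id A) s) hf (span_J hf s (id0 hZ))
  (fun x y => @span_add _ _ _ hf hZ s x y) (fun a x => @span_scale _ _ _ hf hZ s a x) (size g) (fun i => g`_i).
have all_g : forall i, (i < size g)%nat -> span f (@zero_id A) s g`_i.
  apply: key => i hi.
  have [b hb] := Hs g`_i.
  case: hb => n [r [yy [myy hy]]].
  have [a ha] := ClassicalEpsilon.choice (fun k (ak : nat -> A) =>
      r k - \sum_(l < size g) f (ak l) * g`_l = 0)
      (fun k => let: ex_intro c hc := Hg (r k) in ex_intro _ c hc).
  exists (\sum_(j < size s) f (b j) * s`_j), (fun l => \sum_(k < n) a k l * yy k).
  split; first by apply: (@span_sum _ _ _ hf hZ _ (size s) (fun j => f (b j) * s`_j)) => j hj;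
    apply: span_scale => //; apply: span_nth.
  split; first by move=> l; apply: (@m_sum _ _ Hm n (fun k => a k l * yy k)) => k _; apply: (mMl Hm).
  have -> : \sum_(l < size g) f (\sum_(k < n) a k l * yy k) * g`_l
      = \sum_(k < n) r k * f (yy k).
    have er : forall k, r k = \sum_(l < size g) f (a k l) * g`_l.
      by move=> k; apply/eqP; rewrite -subr_eq0; apply/eqP.
    under eq_bigr => l _ do rewrite (@rmap_sum _ f n (fun k => a k l * yy k) hf) mulr_suml.
    rewrite exchange_big /=; apply: eq_bigr => k _.
    rewrite er mulr_suml; apply: eq_bigr => l _.
    by rewrite fM mulrAC.
  by rewrite -hy addrC subrK.
move=> x; have [c hc] := Hg x.
have -> : x = (x - \sum_(i < size g) f (c i) * g`_i) + \sum_(i < size g) f (c i) * g`_i by rewrite subrK.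
apply: span_add => //; first by apply: span_J.
by apply: (@span_sum _ _ _ hf hZ _ (size g) (fun i => f (c i) * g`_i)) => i hi; apply: span_scale => //; apply: all_g.
Qed.

End Loc.



Section Stein.
Variable A : comUnitRingType.
Variable m : A -> Prop.
Hypothesis Hm : local_max m.
Variables (f : A -> A) (J : A -> Prop).
Hypotheses (hf : rmap f) (hJ : is_ideal J) (HJm : forall c x, m c -> J (f c * x)).

Lemma sum_delta (t : seq A) i a : (i < size t)%nat ->
  \sum_(k < size t) f (if (k:nat) == i then a else 0) * t`_k = f a * t`_i.
Proof.
move=> hi; rewrite (bigD1 (Ordinal hi)) //= eqxx.
rewrite big1 ?addr0 // => k hk; have -> : ((k:nat) == i) = false.
  by apply/negbTE; move: hk; apply: contra => /eqP h; apply/eqP/val_inj.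
by rewrite (rmap0 hf) mul0r.
Qed.

Lemma steinitz (s t : seq A) : (forall i, (i < size t)%nat -> span f J s t`_i) ->
  indep m f J t -> (size t <= size s)%nat.
Proof.
have [fD [fM f1]] := hf.
elim: s t => [|s0 s IH] t Ht It.
  case E: (size t) => [//|n].
  have h0 : (0 < size t)%nat by rewrite E.
  have [c hc] := Ht 0%nat h0.
  rewrite big_ord0 subr0 in hc.
  have := It (fun k => if k == 0%nat then 1 else 0).
  rewrite sum_delta // f1 mul1r => /(_ hc 0%nat h0) /=.
  by move/(m1 Hm).
have Hc : forall i, exists p : A * A, (i < size t)%nat ->
    t`_i = f p.1 * s0 + p.2 /\ span f J s p.2.
  move=> i; case: (boolP (i < size t)%nat) => hi; last by exists (0, 0).
  have [c hc] := Ht i hi.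
  exists (c 0%nat, t`_i - f (c 0%nat) * s0) => _ /=; split; first by rewrite addrC subrK.
  exists (fun k => c k.+1); move: hc; rewrite /= big_ord_recl /=.
  by rewrite opprD addrA.
have [p hp] := ClassicalEpsilon.choice _ Hc.
pose a i := (p i).1; pose w i := (p i).2.
case: (classic (forall i, (i < size t)%nat -> m (a i))) => [ma | nma].
  apply: (@leq_trans (size s)); last by apply: leqnSn.
  apply: IH => // i hi; have [-> sw] := hp i hi.
  apply: span_add => //.
  by apply: span_J => //; apply: HJm; apply: ma.
have [j0 [hj0 naj0]] : exists j0, (j0 < size t)%nat /\ ~ m (a j0).
  apply: NNPP => hn; apply: nma => i hi; apply: NNPP => hm; apply: hn; by exists i.
have uj0 := m_unit Hm naj0.
move: hj0 Ht It hp; case E: (size t) => [//|n] hj0 Ht It hp.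
pose t' := mkseq (fun i => t`_(bump j0 i) - f (a (bump j0 i) / a j0) * t`_j0) n.
have hb : forall i, (i < n)%nat -> (bump j0 i < n.+1)%nat.
  by move=> i hi; rewrite /bump; case: (j0 <= i)%nat; rewrite /= ?add1n ?add0n // ltnW.
suff : (size t' <= size s)%nat by rewrite size_mkseq.
apply: IH.
  move=> i; rewrite size_mkseq => hi; rewrite nth_mkseq //.
  have [e1 s1] := hp _ (hb i hi); have [e2 s2] := hp _ hj0.
  rewrite {1}e1 e2.
  have -> : f (p (bump j0 i)).1 * s0 + (p (bump j0 i)).2 -
      f (a (bump j0 i) / a j0) * (f (p j0).1 * s0 + (p j0).2)
      = (p (bump j0 i)).2 - f (a (bump j0 i) / a j0) * (p j0).2.
    have ee : f (a (bump j0 i) / a j0) * f (p j0).1 = f (p (bump j0 i)).1.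
      by rewrite -fM divrK.
    rewrite mulrDr mulrA ee; ring.
  by apply: span_sub => //; apply: span_scale.
move=> c' Hc' i; rewrite size_mkseq => hi.
pose cc k := if k == j0 then - \sum_(i < n) c' i * (a (bump j0 i) / a j0) else c' (unbump j0 k).
have hsum : \sum_(k < size t) f (cc k) * t`_k = \sum_(i < size t') f (c' i) * t'`_i.
  rewrite E (bigD1_ord (Ordinal hj0)) //= size_mkseq.
  have -> : \sum_(i < n) f (cc (bump j0 i)) * t`_(bump j0 i) = \sum_(i < n) f (c' i) * t`_(bump j0 i).
    apply: eq_bigr => k _; rewrite /cc; have -> : (bump j0 k == j0) = false.
      by apply/negbTE; rewrite eq_sym neq_bump.
    by rewrite bumpK.
  rewrite /cc eqxx (rmapN hf) (@rmap_sum _ f n (fun i => c' i * (a (bump j0 i) / a j0)) hf).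
  have -> : \sum_(i < n) f (c' i) * t'`_i =
     \sum_(i < n) f (c' i) * t`_(bump j0 i) - (\sum_(i < n) f (c' i * (a (bump j0 i) / a j0))) * t`_j0.
    rewrite mulr_suml -sumrB; apply: eq_bigr => k _.
    by rewrite nth_mkseq ?ltn_ord // [f (c' k * _)]fM; ring.
  by rewrite addrC mulNr.
have hbt : (bump j0 i < size t)%nat by rewrite E; apply: hb.
have := It cc; rewrite hsum => /(_ Hc' (bump j0 i) hbt).
by rewrite /cc (negbTE (_ : bump j0 i != j0)) ?bumpK // eq_sym neq_bump.
Qed.

End Stein.



Section Chains.
Variable A : comUnitRingType.
Variable m : A -> Prop.
Hypothesis Hm : local_max m.
Variable f : A -> A.
Hypotheses (hf : rmap f) (hloc : forall y, m y -> m (f y)).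

Lemma minspan_indep (J : A -> Prop) (s : seq A) : is_ideal J ->
  (forall x, span f J s x) -> (forall s', (forall x, span f J s' x) -> (size s <= size s')%nat) ->
  indep m f J s.
Proof.
move=> hJ Hs Hmin c Hc i0 hi0; apply: NNPP => nm.
have [fD [fM f1]] := hf.
have uu := m_unit Hm nm.
move: hi0 Hc Hs Hmin; case E: (size s) => [//|n] hi0 Hc Hs Hmin.
pose s' := mkseq (fun i => s`_(bump i0 i)) n.
suff : (n.+1 <= size s')%nat by rewrite size_mkseq ltnn.
apply: Hmin => x; apply: (@span_trans _ _ _ hf hJ s' s x); last exact: Hs.
move=> k hk; case: (eqVneq k i0) => [-> | nk].
  rewrite (bigD1_ord (Ordinal hi0)) //= in Hc.
  have -> : s`_i0 = f (c i0)^-1 * (f (c i0) * s`_i0 + \sum_(i < n) f (c (bump i0 i)) * s`_(bump i0 i))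
      - \sum_(i < n) f ((c i0)^-1 * c (bump i0 i)) * s'`_i.
    rewrite mulrDr mulrA -fM mulVr // f1 mul1r mulr_sumr.
    rewrite -[in RHS]addrA [X in _ + X](_ : _ = 0) ?addr0 //; apply/eqP; rewrite subr_eq0; apply/eqP.
    apply: eq_bigr => i _; by rewrite nth_mkseq // fM mulrA.
  apply: span_sub => //; first by apply: (span_J hf); apply: idMl.
  apply: (@span_sum _ _ _ hf hJ _ n (fun i => f ((c i0)^-1 * c (bump i0 i)) * s'`_i)) => i hi.
  by apply: span_scale => //; apply: span_nth => //; rewrite size_mkseq.
have hu : (unbump i0 k < n)%nat.
  move: hk nk hi0; rewrite E /unbump neq_ltn; case: (ltnP i0 k) => h hk /= nk hi0; lia.
have -> : s`_k = s'`_(unbump i0 k) by rewrite nth_mkseq // unbumpK // inE.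
by apply: span_nth => //; rewrite size_mkseq.
Qed.

Lemma block_lemma (K : A -> Prop) (t : seq A) (x : A) (c : nat -> A) : is_ideal K ->
  indep m f m t -> ~ K x -> K (\sum_(j < size t) f (c j) * (t`_j * x)) ->
  forall j, (j < size t)%nat -> m (c j).
Proof.
move=> hK It nx HK; apply: It.
apply: NNPP => na; apply: nx.
have ua := m_unit Hm na.
move: HK; under eq_bigr => j _ do rewrite mulrA.
rewrite -mulr_suml => HK.
by rewrite -(mulKr ua x); apply: idMl.
Qed.

Definition Iext := ext_ideal m f.

Lemma Iext_ideal : is_ideal Iext.
Proof.
split; first by exists 0%nat, (fun _ => 0), (fun _ => 0); split; [move=> _; apply: (m0 Hm)| rewrite big_ord0].
split.
  move=> x y [n1 [r1 [y1 [h1 ->]]]] [n2 [r2 [y2 [h2 ->]]]].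
  exists (n1 + n2)%nat, (fun i => if (i < n1)%nat then r1 i else r2 (i - n1)%nat),
    (fun i => if (i < n1)%nat then y1 i else y2 (i - n1)%nat).
  split; first by move=> i; case: ifP.
  rewrite big_split_ord /=; f_equal.
    by apply: eq_bigr => i _; rewrite ltn_ord.
  by apply: eq_bigr => i _; rewrite ltnNge leq_addr /= addKn.
move=> r x [n [rr [yy [h ->]]]]; exists n, (fun i => r * rr i), yy; split => //.
by rewrite mulr_sumr; apply: eq_bigr => i _; rewrite mulrA.
Qed.

Lemma Iext_HJm c x : m c -> Iext (f c * x).
Proof.
move=> mc; exists 1%nat, (fun _ => x), (fun _ => c); split => //.
by rewrite big_ord1 mulrC.
Qed.

Lemma Iext_m x : Iext x -> m x.
Proof.
move=> [n [rr [yy [h ->]]]]; apply: (@m_sum _ _ Hm n (fun i => rr i * f (yy i))) => i _.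
by apply: (mMl Hm); apply: hloc.
Qed.

Lemma chain_mono (I : A -> Prop) (J : nat -> A -> Prop) L : ideal_chain I J L -> forall i j, (i <= j)%nat -> (j <= L)%nat ->
  forall x, J i x -> J j x.
Proof.
move=> [_ [_ [_ hc]]] i j hij; elim: j hij => [|j IH] hij hjL x.
  by rewrite leqn0 in hij; move/eqP: hij => ->.
rewrite leq_eqVlt in hij; case/orP: hij => [/eqP -> // | hij].
move=> Jx; have [h _] := hc j hjL; apply: h; apply: IH => //.
by apply: ltnW.
Qed.

Lemma chain_bound (J : nat -> A -> Prop) L (b s : seq A) :
  ideal_chain Iext J L -> indep m f m b -> gens_via f s -> (L * size b <= size s)%nat.
Proof.
move=> hch Ib Gs.
have [hJi [hJ0 [hJL hJs]]] := hch.
have Hx : forall i, exists x, (i < L)%nat -> J i.+1 x /\ ~ J i x.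
  move=> i; case: (boolP (i < L)%nat) => hi; last by exists 0.
  by have [_ [x hx]] := hJs i hi; exists x.
have [x hx] := ClassicalEpsilon.choice _ Hx.
pose q := size b.
pose t := blk L q (fun i j => b`_j * x i).
have -> : (L * q)%nat = size t by rewrite size_blk.
have hI := Iext_ideal.
apply: (@steinitz _ _ Hm f Iext hf hI Iext_HJm).
  move=> k hk; apply: (@span_mono _ _ (@zero_id A)); first by move=> y ->; apply: id0.
  by move/gens_span: Gs; apply.
move=> c Hc k; rewrite size_blk => hk.
have [hi [hj ->]] := blk_split hk.
move: Hc; rewrite (@sum_blk _ L q _ (fun k => f (c k))) /= => Hc.
have key : forall l, (l <= L)%nat ->
  J 0%nat (\sum_(i < l) \sum_(j < q) f (c (i * q + j)%nat) * (b`_j * x i)) ->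
  forall i j, (i < l)%nat -> (j < q)%nat -> m (c (i * q + j)%nat).
  elim=> [|l IH] hl H i j; first by [].
  rewrite big_ord_recr /= in H.
  set S := \sum_(i < l) _ in H; set T := \sum_(j < q) _ in H.
  have hlL : (l < L)%nat by [].
  have [xl1 nxl] := hx l hlL.
  have SJ : J l S.
    apply: (@id_sum _ (J l) l (fun i' => \sum_(j < q) f (c (i' * q + j)%nat) * (b`_j * x i'))) => // i' hi'.
    apply: (@id_sum _ (J l) q (fun j => f (c (i' * q + j)%nat) * (b`_j * x i'))) => // j' hj'.
    rewrite mulrA; apply: idMl => //.
    have [xi _] := hx i' (ltn_trans hi' hlL).
    by apply: (chain_mono hch hi') => //; apply: ltnW.
  have TJ : J l T.
    have -> : T = (S + T) - S by rewrite addrC addKr.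
    apply: idB => //; apply: (chain_mono hch (leq0n l)) => //; exact: ltnW hlL.
  have mT : forall j', (j' < q)%nat -> m (c (l * q + j')%nat).
    move=> j' hj'; exact: (@block_lemma (J l) b (x l) (fun j' => c (l * q + j')%nat) (hJi l) Ib nxl TJ j' hj').
  have TI : J 0%nat T.
    apply/hJ0; apply: (@id_sum _ Iext q (fun j => f (c (l * q + j)%nat) * (b`_j * x l))) => //.
    by move=> j' hj'; apply: Iext_HJm; apply: mT.
  rewrite ltnS leq_eqVlt => /orP [/eqP -> | hil] hjq; first exact: mT.
  apply: IH => //; first by apply: ltnW.
  have HS : J 0%nat (S + T - T) by apply: idB.
  by rewrite addrK in HS.
by apply: (key L) => //; apply/hJ0.
Qed.

End Chains.



Section Refine.
Variable A : comUnitRingType.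
Variable m : A -> Prop.
Hypothesis Hm : local_max m.

Definition gen_id (J : A -> Prop) (x : A) (y : A) : Prop := exists j a, J j /\ y = j + a * x.

Lemma gen_ideal J x : is_ideal J -> is_ideal (gen_id J x).
Proof.
move=> hJ; split; first by exists 0, 0; rewrite mul0r addr0; split => //; apply: id0.
split.
  move=> y1 y2 [j1 [a1 [h1 ->]]] [j2 [a2 [h2 ->]]]; exists (j1 + j2), (a1 + a2).
  by split; [apply: idD | rewrite mulrDl addrACA].
move=> r y [j [a [h ->]]]; exists (r * j), (r * a).
by split; [apply: idMl | rewrite mulrDr mulrA].
Qed.

Lemma gen_sub J x y : is_ideal J -> J y -> gen_id J x y.
Proof. by move=> hJ h; exists y, 0; rewrite mul0r addr0. Qed.

Lemma gen_x J x : is_ideal J -> gen_id J x x.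
Proof. by move=> hJ; exists 0, 1; rewrite mul1r add0r; split => //; apply: id0. Qed.

Lemma gen_le (J K : A -> Prop) x : is_ideal K -> (forall y, J y -> K y) -> K x ->
  forall y, gen_id J x y -> K y.
Proof. by move=> hK hJK hx y [j [a [h ->]]]; apply: idD => //; [apply: hJK | apply: idMl]. Qed.

Lemma refine (J L : A -> Prop) : is_ideal J -> is_ideal L -> (forall y, J y -> L y) ->
  (exists x, L x /\ ~ J x) ->
  (exists K, is_ideal K /\ (forall y, J y -> K y) /\ (forall y, K y -> L y) /\
     (exists y, K y /\ ~ J y) /\ (exists y, L y /\ ~ K y)) \/
  (exists x, (forall y, L y <-> gen_id J x y) /\ (forall z, m z -> J (z * x))).
Proof.
move=> hJ hL hJL [x [Lx nJx]].
case: (classic (exists y, L y /\ ~ gen_id J x y)) => [hy | hy].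
  left; exists (gen_id J x); split; first exact: gen_ideal.
  split; first by move=> y; apply: gen_sub.
  split; first exact: gen_le.
  by split => //; exists x; split => //; apply: gen_x.
have eqL : forall y, L y <-> gen_id J x y.
  move=> y; split; last exact: gen_le.
  by move=> Ly; apply: NNPP => ng; apply: hy; exists y.
case: (classic (forall z, m z -> J (z * x))) => [hz | hz].
  by right; exists x.
have [z [mz nzx]] : exists z, m z /\ ~ J (z * x).
  apply: NNPP => hn; apply: hz => z mz; apply: NNPP => h; apply: hn; by exists z.
left; exists (gen_id J (z * x)); split; first exact: gen_ideal.
split; first by move=> y; apply: gen_sub.
split; first by apply: gen_le => //; apply: idMl.
split; first by exists (z * x); split => //; apply: gen_x.
exists x; split => // [[j [a [hj ex]]]]; apply: nJx.
have uu : 1 - a * z \is a GRing.unit.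
  apply: (m_unit Hm) => h; apply: (m1 Hm).
  rewrite -(subrK (a * z) 1); apply: (mD Hm) => //; exact: (mMl Hm).
have -> : x = (1 - a * z)^-1 * j.
  have ej : j = x - a * (z * x) by rewrite {1}ex addrK.
  apply: (mulrI uu); rewrite mulrA mulrV // mul1r ej; ring.
exact: idMl.
Qed.

Definition insJ (J : nat -> A -> Prop) (i : nat) (K : A -> Prop) (k : nat) : A -> Prop :=
  if (k <= i)%nat then J k else if k == i.+1 then K else J k.-1.

Lemma insert_chain (I : A -> Prop) J L i K : ideal_chain I J L -> (i < L)%nat -> is_ideal K ->
  (forall y, J i y -> K y) -> (forall y, K y -> J i.+1 y) ->
  (exists y, K y /\ ~ J i y) -> (exists y, J i.+1 y /\ ~ K y) ->
  ideal_chain I (insJ J i K) L.+1.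
Proof.
move=> [hJi [hJ0 [hJL hJs]]] hi hK h1 h2 h3 h4.
split; first by move=> k; rewrite /insJ; case: ifP => _ //; case: ifP.
split; first by move=> x; rewrite /insJ leq0n.
split.
  move=> x; rewrite /insJ ifF; last by apply/negbTE; rewrite -ltnNge ltnS ltnW.
  by rewrite ifF //; apply/negbTE; rewrite eqSS neq_ltn hi orbT.
move=> k hk; rewrite /insJ.
case: (ltngtP k i) => hki.
- exact: hJs k (leq_trans hki (ltnW hi)).
- have -> : (k.+1 == i.+1) = false by apply/negbTE; rewrite eqSS neq_ltn hki orbT.
  case: (eqVneq k i.+1) => [-> | nk]; first by split.
  have hk' : (i.+1 < k)%nat by rewrite ltn_neqAle eq_sym nk hki.
  have hk0 : (0 < k)%nat by rewrite (leq_ltn_trans (leq0n i) hki).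
  by have := hJs k.-1; rewrite prednK //=; apply.
- subst k; rewrite eqxx; split => //.
Qed.

Definition simple_step (J : nat -> A -> Prop) (i : nat) :=
  exists x, (forall y, J i.+1 y <-> gen_id (J i) x y) /\ (forall z, m z -> J i (z * x)).

Lemma max_chain_simple (I : A -> Prop) J L : ideal_chain I J L ->
  (forall J' L', ideal_chain I J' L' -> (L' <= L)%nat) ->
  forall i, (i < L)%nat -> simple_step J i.
Proof.
move=> hch hmax i hi; have [hJi [hJ0 [hJL hJs]]] := hch.
have [hsub hstr] := hJs i hi.
case: (@refine (J i) (J i.+1) (hJi i) (hJi i.+1) hsub hstr) => [[K [hK [k1 [k2 [k3 k4]]]]] | //].
have := hmax _ _ (insert_chain hch hi hK k1 k2 k3 k4).
by rewrite ltnn.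
Qed.

End Refine.



Lemma ex_min (P : nat -> Prop) : (exists n, P n) -> exists n, P n /\ forall k, P k -> (n <= k)%nat.
Proof.
move=> [n0 Pn0]; apply: NNPP => hn.
suff H : forall N n, (n <= N)%nat -> ~ P n by apply: (H n0 n0).
elim=> [|N IH] n hn' Pn.
  apply: hn; exists n; split => // k _; by rewrite leqn0 in hn'; move/eqP: hn' => ->.
apply: hn; exists n; split => // k Pk; rewrite leqNgt; apply/negP => hk.
by apply: (IH k) => //; rewrite -ltnS (leq_trans hk hn').
Qed.

Lemma ex_max (P : nat -> Prop) B : (exists n, P n) -> (forall n, P n -> (n <= B)%nat) ->
  exists n, P n /\ forall k, P k -> (k <= n)%nat.
Proof.
move=> [n0 Pn0] hB.
have [k [[Pk kB] hk]] := @ex_min (fun k => P (B - k)%nat /\ (k <= B)%nat)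
  (ex_intro _ (B - n0)%nat (conj (eq_ind_r P Pn0 (subKn (hB _ Pn0))) (leq_subr _ _))).
exists (B - k)%nat; split => // n Pn.
have h1 : P (B - (B - n))%nat /\ (B - n <= B)%nat.
  by split; [rewrite subKn // hB | apply: leq_subr].
have := hk _ h1; have := hB _ Pn; lia.
Qed.

Section Main.
Variable A : comUnitRingType.
Variable m : A -> Prop.
Hypothesis Hm : local_max m.

Lemma is_nu_uniq (f : A -> A) a b : is_nu f a -> is_nu f b -> a = b.
Proof.
move=> [[sa [ea ga]] ha] [[sb [eb gb]] hb]; apply/eqP; rewrite eqn_leq.
by apply/andP; split; [rewrite -eb; apply: ha | rewrite -ea; apply: hb].
Qed.

Lemma nu_eq (f : A -> A) n : is_nu f n -> nu f = n.
Proof.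
move=> h; apply: (is_nu_uniq _ h); rewrite /nu; apply: epsilon_spec; by exists n.
Qed.

Lemma is_len_uniq (I : A -> Prop) a b : is_length_quot I a -> is_length_quot I b -> a = b.
Proof.
move=> [[Ja ca] ha] [[Jb cb] hb]; apply/eqP; rewrite eqn_leq.
by rewrite (hb _ _ ca) (ha _ _ cb).
Qed.

Lemma len_eq (I : A -> Prop) n : is_length_quot I n -> length_quot I = n.
Proof.
move=> h; apply: (is_len_uniq _ h); rewrite /length_quot; apply: epsilon_spec; by exists n.
Qed.

Variable f : A -> A.
Hypotheses (hf : rmap f) (hloc : forall y, m y -> m (f y)) (hfin : exists g, gens_via f g).
Variable b : seq A.
Hypotheses (Ib : indep m f m b) (Sb : forall y, span f m b y).

Lemma b_pos : (0 < size b)%nat.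
Proof.
case E: (size b) => [|//]; exfalso; apply: (m1 Hm).
have [c hc] := Sb 1; by rewrite E big_ord0 subr0 in hc.
Qed.

Lemma simple_span (J : nat -> A -> Prop) L : ideal_chain (Iext m f) J L ->
  (forall i, (i < L)%nat -> simple_step m J i) ->
  exists t, size t = (L * size b)%nat /\ forall y, span f (Iext m f) t y.
Proof.
move=> hch hs; have [hJi [hJ0 [hJL hJs]]] := hch.
have Hx : forall i, exists x, (i < L)%nat ->
    (forall y, J i.+1 y <-> gen_id (J i) x y) /\ (forall z, m z -> J i (z * x)).
  move=> i; case: (boolP (i < L)%nat) => hi; last by exists 0.
  by have [x hx] := hs i hi; exists x.
have [x hx] := ClassicalEpsilon.choice _ Hx.
pose q := size b.
pose t := blk L q (fun i j => b`_j * x i).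
exists t; split; first by rewrite size_blk.
have hI := Iext_ideal Hm f.
have key : forall l, (l <= L)%nat -> forall y, J l y -> span f (Iext m f) t y.
  elim=> [|l IH] hl y Jy.
    by apply: (span_J hf); apply/hJ0.
  have [eq1 mz] := hx l hl.
  have [j [a [hj ->]]] := (eq1 y).1 Jy.
  have hl' : (l <= L)%nat by apply: ltnW.
  apply: span_add => //; first exact: IH.
  have [c hc] := Sb a.
  rewrite -(subrK (\sum_(i < size b) f (c i) * b`_i) a) mulrDl.
  apply: span_add => //; first by apply: IH => //; apply: mz.
  rewrite mulr_suml.
  apply: (@span_sum _ _ _ hf hI _ q (fun i => f (c i) * b`_i * x l)) => i hi.
  rewrite -mulrA; apply: span_scale => //.
  have -> : b`_i * x l = t`_(l * q + i) by rewrite nth_blk.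
  by apply: span_nth => //; rewrite size_blk; apply: ij_lt.
by move=> y; apply: (key L) => //; apply: hJL.
Qed.

Lemma nu_lambda : nu f = (lambda m f * size b)%nat.
Proof.
have [g0 hg0] := hfin.
have [n0 [[s0 [e0 g0s]] hmin]] := @ex_min (fun n => exists s, size s = n /\ gens_via f s)
   (ex_intro _ (size g0) (ex_intro _ g0 (conj erefl hg0))).
have hnu : is_nu f n0.
  by split; [exists s0 | move=> s gs; apply: hmin; exists s].
rewrite (nu_eq hnu).
have hI := Iext_ideal Hm f.
have bnd : forall J L, ideal_chain (Iext m f) J L -> (L <= n0)%nat.
  move=> J L hc; have := chain_bound Hm hf hc Ib g0s; rewrite e0 => h.
  apply: leq_trans h; rewrite leq_pmulr //; exact: b_pos.
have ne : exists L, exists J, ideal_chain (Iext m f) J L.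
  exists 1%nat, (fun k => if k == 0%nat then Iext m f else (fun _ => True)).
  split; first by move=> i; case: ifP => // _; split => //.
  split; first by [].
  split; first by [].
  move=> i; rewrite ltnS leqn0 => /eqP -> /=; split => //.
  exists 1; split => // h1; apply: (m1 Hm); exact: (Iext_m Hm hloc h1).
have [Lm [[Jm hJm] hLm]] := ex_max ne (fun L => fun '(ex_intro J hc) => bnd J L hc).
have hlen : is_length_quot (Iext m f) Lm.
  by split; [exists Jm | move=> J k hc; apply: hLm; exists J].
rewrite /lambda (len_eq hlen).
apply/eqP; rewrite eqn_leq; apply/andP; split.
  have hs := max_chain_simple Hm hJm (fun J' L' hc => hLm L' (ex_intro _ J' hc)).
  have [t [et st]] := simple_span hJm hs.
  rewrite -et; apply: hmin; exists t; split => //.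
  apply/gens_span; apply: (nakayama Hm hf); last exact: st.
  by exists g0; apply/gens_span.
have := chain_bound Hm hf hJm Ib g0s; by rewrite e0.
Qed.

End Main.



Section Phi.
Variable A : comUnitRingType.
Variable m : A -> Prop.
Hypothesis Hm : local_max m.
Variable phi : {rmorphism A -> A}.
Hypotheses (hloc : local_map m phi) (hfin : finite_map phi).

Lemma indep_ext (f g : A -> A) J s : (forall y, f y = g y) -> indep m f J s -> indep m g J s.
Proof.
move=> e H c Hc; apply: H; suff -> : \sum_(i < size s) f (c i) * s`_i = \sum_(i < size s) g (c i) * s`_i by [].
by apply: eq_bigr => i _; rewrite e.
Qed.

Lemma hphi : rmap phi.
Proof. exact: (rmap_iter phi 1). Qed.

Lemma loc_iter n y : m y -> m (iter n phi y).
Proof. by elim: n => [//|n IH] /= my; apply: hloc; apply: IH. Qed.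

Lemma gens_iter n : exists g, gens_via (iter n phi) g.
Proof.
have [g1 hg1] := hfin.
elim: n => [|n [g hg]].
  exists [:: 1] => x; exists (fun _ => x); by rewrite big_ord1 /= mulr1.
exists (blk (size g1) (size g) (fun i j => phi g`_j * g1`_i)).
apply/gens_span => x.
apply: (@span_ext _ (fun y => phi (iter n phi y))) => //.
apply: (prod_span hphi (rmap_iter phi n) (@zero_ideal A)).
- by move=> y a; rewrite /zero_id => ->; rewrite rmorph0 mul0r.
- by apply/gens_span.
- by apply/gens_span.
Qed.

Lemma res_basis : exists b : seq A, size b = res_deg m phi /\ indep m phi m b /\ forall y, span phi m b y.
Proof.
have [g1 hg1] := hfin.
have sp1 : res_spans m phi g1.
  move=> x; apply: (@span_mono _ _ (@zero_id A)); first by move=> y ->; apply: (m0 Hm).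
  by move/gens_span: hg1; apply.
have [d0 [[b [eb sb]] hmin]] := @ex_min (fun n => exists s, size s = n /\ res_spans m phi s)
   (ex_intro _ (size g1) (ex_intro _ g1 (conj erefl sp1))).
have hrd : is_res_deg m phi d0.
  by split; [exists b | move=> s hs; apply: hmin; exists s].
have -> : res_deg m phi = d0.
  have : is_res_deg m phi (res_deg m phi) by apply: epsilon_spec; exists d0.
  move=> [[b' [eb' sb']] h']; apply/eqP; rewrite eqn_leq; apply/andP; split.
    by rewrite -eb; apply: h'.
  by rewrite -eb'; apply: hmin; exists b'.
exists b; split => //; split => //.
apply: (minspan_indep Hm hphi (m_ideal Hm)) => // s' hs'.
by rewrite eb; apply: hmin; exists s'.
Qed.

Lemma basis_iter n : exists b : seq A, size b = expn (res_deg m phi) n /\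
  indep m (iter n phi) m b /\ forall y, span (iter n phi) m b y.
Proof.
have [b1 [e1 [i1 s1]]] := res_basis.
elim: n => [|n [b [eb [ib sb]]]].
  exists [:: 1]; split => //; split.
    move=> c hc i; rewrite ltnS leqn0 => /eqP ->; move: hc; by rewrite big_ord1 /= mulr1.
  move=> x; exists (fun _ => x); rewrite big_ord1 /= mulr1 subrr; exact: (m0 Hm).
exists (blk (size b1) (size b) (fun i j => phi b`_j * b1`_i)).
split; first by rewrite size_blk e1 eb -expnS.
split.
  apply: (@indep_ext (fun y => phi (iter n phi y))) => //.
  exact: (prod_indep hphi (rmap_iter phi n) i1 ib).
move=> x; apply: (@span_ext _ (fun y => phi (iter n phi y))) => //.
apply: (prod_span hphi (rmap_iter phi n) (m_ideal Hm)) => //.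
by move=> y a my; apply: (mMr Hm); apply: hloc.
Qed.

Lemma nu_lambda_iter n : nu (iter n phi) = (lambda m (iter n phi) * expn (res_deg m phi) n)%nat.
Proof.
have [b [eb [ib sb]]] := basis_iter n.
rewrite -eb; apply: (nu_lambda Hm (rmap_iter phi n)) => //.
  by move=> y; apply: loc_iter.
exact: gens_iter.
Qed.

Lemma nu_spec n : is_nu (iter n phi) (nu (iter n phi)).
Proof.
apply: epsilon_spec.
have [g hg] := gens_iter n.
have [n0 [[s0 [e0 g0s]] hmin]] := @ex_min (fun k => exists s, size s = k /\ gens_via (iter n phi) s)
   (ex_intro _ (size g) (ex_intro _ g (conj erefl hg))).
exists n0; split; [exists s0 | move=> s gs; apply: hmin; exists s] => //.
Qed.

Lemma nu_pos n : (0 < nu (iter n phi))%nat.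
Proof.
have [[s [es gs]] _] := nu_spec n.
rewrite -es; case: s es gs => [|//] _ gs.
have [c hc] := gs 1; move: hc; rewrite big_ord0 => /eqP; by rewrite oner_eq0.
Qed.

Lemma nu_submul p q : (nu (iter (p + q) phi) <= nu (iter p phi) * nu (iter q phi))%nat.
Proof.
have [[t [et gt]] _] := nu_spec p.
have [[s [es gs]] _] := nu_spec q.
have [_ hmin] := nu_spec (p + q).
rewrite -et -es -(@size_blk A (size t) (size s) (fun i j => iter p phi s`_j * t`_i)); apply: hmin.
apply/gens_span => x.
apply: (@span_ext _ (fun y => iter p phi (iter q phi y))) => [y|]; first by rewrite iterD.
apply: (prod_span (rmap_iter phi p) (rmap_iter phi q) (@zero_ideal A)).
- by move=> y a; rewrite /zero_id => ->; rewrite (rmap0 (rmap_iter phi p)) mul0r.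
- by apply/gens_span.
- by apply/gens_span.
Qed.

Lemma res_deg_pos : (0 < res_deg m phi)%nat.
Proof.
have [b [eb [_ sb]]] := res_basis.
rewrite -eb; case: b eb sb => [|//] _ sb.
have [c hc] := sb 1; move: hc; rewrite big_ord0 subr0; by move/(m1 Hm).
Qed.

Lemma lambda_pos n : (0 < lambda m (iter n phi))%nat.
Proof.
have := nu_pos n; rewrite nu_lambda_iter; by rewrite muln_gt0 => /andP [].
Qed.

End Phi.

End H1.

Module H2.
Local Open Scope R_scope.


Lemma sub_iter (b : nat -> R) K r q :
  (forall p q, b (S p + S q)%coq_nat <= b (S p) + b (S q)) -> (0 < K)%coq_nat -> (0 < r)%coq_nat ->
  b (q * K + r)%coq_nat <= INR q * b K + b r.
Proof.
move=> hs hK hr; elim: q => [|q IH]; first by rewrite /= Rmult_0_l Rplus_0_l; lra.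
have e : (S q * K + r = S (K - 1) + S (q * K + r - 1))%coq_nat by simpl; lia.
rewrite e; apply: Rle_trans; first by apply: hs.
have e1 : S (K - 1) = K by lia.
have e2 : S (q * K + r - 1)%coq_nat = (q * K + r)%coq_nat by lia.
rewrite e1 e2 S_INR; lra.
Qed.

Lemma fekete (b : nat -> R) : (forall n, 0 <= b n) ->
  (forall p q, b (S p + S q)%coq_nat <= b (S p) + b (S q)) ->
  exists L, Un_cv (fun n => b (S n) / INR (S n)) L /\
    (forall n, L <= b (S n) / INR (S n)) /\
    (forall B, (forall n, B <= b (S n) / INR (S n)) -> B <= L).
Proof.
move=> hb hs.
set u := fun n => b (S n) / INR (S n).
have upos : forall n, 0 <= u n.
  move=> n; rewrite /u; apply: Rmult_le_pos => //; apply: Rlt_le; apply: Rinv_0_lt_compat.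
  apply: lt_0_INR; lia.
pose E := fun x => exists n, x = - u n.
have [M [hM1 hM2]] : exists M, is_upper_bound E M /\ (forall y, is_upper_bound E y -> M <= y).
  have := completeness E; case.
  - by exists 0 => x [n ->]; have := upos n; lra.
  - by exists (- u 0%nat), 0%nat.
  by move=> M [h1 h2]; exists M.
have Llow : forall n, - M <= u n.
  move=> n; have h : E (- u n) by exists n.
  have := hM1 _ h; lra.
have Lglb : forall B, (forall n, B <= u n) -> B <= - M.
  move=> B hB; suff : M <= - B by lra.
  by apply: hM2 => x [n ->]; have := hB n; lra.
exists (- M); split; last by split; [exact: Llow | exact: Lglb].
move=> eps heps.
have [k hk] : exists k, u k < - M + eps / 2.
  apply: NNPP => hn; have : - M + eps / 2 <= - M; last by lra.
  by apply: Lglb => n; apply: Rnot_lt_le => h; apply: hn; exists n.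
pose K := S k.
pose Sm := sum_f_R0 b K.
have hsg : forall K r, (r <= K)%coq_nat -> b r <= sum_f_R0 b K.
  elim=> [|K' IH] r hr.
    have -> : r = 0%nat by lia.
    by rewrite /=; lra.
  rewrite /=; case: (Nat.eq_dec r (S K')) => [-> | hne]; first by have := cond_pos_sum b K' hb; lra.
  by have := IH r ltac:(lia); have := hb (S K'); lra.
have hSm : forall r, (r <= K)%coq_nat -> b r <= Sm by move=> r hr; apply: hsg.
have Smpos : 0 <= Sm by apply: Rle_trans (hSm 0%nat ltac:(lia)); apply: hb.
have [N hN] : exists N, Sm / INR (S N) < eps / 2.
  have [hN1 hN2] := archimed (2 * Sm / eps).
  exists (Z.to_nat (up (2 * Sm / eps))).
  have hpos : 0 <= IZR (up (2 * Sm / eps)).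
    apply: Rle_trans; last by apply: Rlt_le; exact: hN1.
    apply: Rmult_le_pos; first lra.
    by apply: Rlt_le; apply: Rinv_0_lt_compat.
  have hz : (0 <= up (2 * Sm / eps))%Z by apply: le_IZR.
  rewrite S_INR INR_IZR_INZ Znat.Z2Nat.id //.
  have hd : 0 < IZR (up (2 * Sm / eps)) + 1 by lra.
  apply: (Rmult_lt_reg_r (IZR (up (2 * Sm / eps)) + 1)) => //.
  rewrite /Rdiv Rmult_assoc Rinv_l; last by lra.
  have : 2 * Sm / eps < IZR (up (2 * Sm / eps)) + 1 by lra.
  move=> h; have : 2 * Sm < eps * (IZR (up (2 * Sm / eps)) + 1).
    have := Rmult_lt_compat_l eps _ _ heps h.
    by rewrite /Rdiv -Rmult_assoc (Rmult_comm eps) Rmult_assoc Rinv_r ?Rmult_1_r //; lra.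
  lra.
exists N => n hn; rewrite /R_dist.
have hlow := Llow n.
suff : u n < - M + eps by move=> h; rewrite Rabs_right; lra.
(* decompose n+1 = q*K + r with 1 <= r <= K *)
pose q := Nat.div n K.
pose r := S (Nat.modulo n K).
have hK : (0 < K)%coq_nat by rewrite /K; lia.
have en : S n = (q * K + r)%coq_nat.
  rewrite /q /r; have := Nat.div_mod_eq n K; lia.
have hr : (0 < r)%coq_nat by rewrite /r; lia.
have hrK : (r <= K)%coq_nat by rewrite /r; have := Nat.mod_upper_bound n K ltac:(lia); lia.
have hq : (q * K <= n)%coq_nat by rewrite /q; have := Nat.div_mod_eq n K; lia.
have hsub := @sub_iter b K r q hs hK hr.
rewrite -en in hsub.
have hbr := hSm r hrK.
have hn1 : 0 < INR (S n) by apply: lt_0_INR; lia.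
have hKpos : 0 < INR K by apply: lt_0_INR.
have hukk : b K / INR K < - M + eps / 2 by exact: hk.
have huK0 : 0 <= b K / INR K by apply: upos.
(* u n <= q*K/(n+1) * (bK/K) + Sm/(n+1) *)
have hqK : INR q * INR K <= INR (S n).
  rewrite -mult_INR; apply: le_INR; lia.
have hSmn : Sm / INR (S n) <= Sm / INR (S N).
  apply: Rmult_le_compat_l => //; apply: Rinv_le_contravar; first by apply: lt_0_INR; lia.
  by apply: le_INR; lia.
have : u n <= b K / INR K + Sm / INR (S n).
  rewrite /u; apply: (Rmult_le_reg_r (INR (S n))) => //.
  rewrite Rmult_plus_distr_r /Rdiv !Rmult_assoc Rinv_l; last by lra.
  rewrite Rmult_1_r.
  have : b K * / INR K * INR (S n) >= INR q * b K.
    have -> : INR q * b K = b K * / INR K * (INR q * INR K).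
      field; lra.
    apply: Rle_ge; apply: Rmult_le_compat_l => //.
  rewrite -Rmult_assoc => h; lra.
lra.
Qed.

End H2.

Unset Implicit Arguments.
Set Strict Implicit.
Set Printing Implicit Defensive.
Import H1 H2.
Lemma ln_mono (x y : R) : (0 < x)%R -> (x <= y)%R -> (ln x <= ln y)%R.
Proof.
move=> hx hxy; case: (Rle_lt_or_eq_dec _ _ hxy) => h.
  by apply: Rlt_le; apply: ln_increasing.
by rewrite h; apply: Rle_refl.
Qed.

Lemma INR_pos (n : nat) : (0 < n)%N -> (0 < INR n)%R.
Proof. by move=> h; apply: lt_0_INR; apply/ltP. Qed.

Lemma INR_muln (a b : nat) : INR (a * b)%N = (INR a * INR b)%R.
Proof. by rewrite -mult_INR. Qed.

Lemma INR_expn (d k : nat) : INR (expn d k) = (INR d ^ k)%R.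
Proof.
elim: k => [|k IH]; first by rewrite expn0.
by rewrite expnS INR_muln IH.
Qed.

Theorem mainTheorem4 (A : comUnitRingType) (m : A -> Prop)
  (phi : {rmorphism A -> A}) :
  noetherian A -> local_max m -> local_map m phi -> finite_map phi ->
  exists nu_inf h_alg : R,
    (* the sequence log nu(phi^n_* A) / n, n >= 1, converges to nu_inf *)
    Un_cv (fun n => (ln (INR (nu (iter n.+1 phi))) / INR n.+1)%R) nu_inf /\
    (* nu_inf is its infimum *)
    (forall n, (nu_inf <= ln (INR (nu (iter n.+1 phi))) / INR n.+1)%R) /\
    (forall b, (forall n, (b <= ln (INR (nu (iter n.+1 phi))) / INR n.+1)%R) ->
       (b <= nu_inf)%R) /\
    (* h_alg(phi, A) = lim (1/n) log lambda(phi^n) *)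
    Un_cv (fun n => (ln (INR (lambda m (iter n.+1 phi))) / INR n.+1)%R) h_alg /\
    nu_inf = (ln (INR (res_deg m phi)) + h_alg)%R.
Proof.
move=> _ Hm hloc hfin.
pose bb := fun n => ln (INR (nu (iter n phi))).
have hb0 : forall n, (0 <= bb n)%R.
  move=> n; rewrite /bb -ln_1; apply: ln_mono; first lra.
  by apply: (le_INR 1); apply/leP; apply: (nu_pos hfin).
have hsub : forall p q, (bb (S p + S q)%coq_nat <= bb (S p) + bb (S q))%R.
  move=> p q; rewrite /bb.
  have hp := nu_pos hfin p.+1; have hq := nu_pos hfin q.+1.
  rewrite -ln_mult; try by apply: INR_pos.
  rewrite -INR_muln; apply: ln_mono; first by apply: INR_pos; apply: (nu_pos hfin).
  by apply: le_INR; apply/leP; apply: (nu_submul hfin p.+1 q.+1).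
have [L [hL1 [hL2 hL3]]] := @fekete bb hb0 hsub.
have dpos := res_deg_pos Hm hfin.
exists L, (L - ln (INR (res_deg m phi)))%R.
split; first exact: hL1.
split; first exact: hL2.
split; first exact: hL3.
split; last by ring.
have eq : forall n, (ln (INR (lambda m (iter n.+1 phi))) / INR n.+1 =
    bb n.+1 / INR n.+1 - ln (INR (res_deg m phi)))%R.
  move=> n; rewrite /bb (nu_lambda_iter Hm hloc hfin) INR_muln INR_expn.
  have hl := lambda_pos Hm hloc hfin n.+1.
  rewrite ln_mult; first last.
  - by apply: pow_lt; apply: INR_pos.
  - by apply: INR_pos.
  rewrite ln_pow; last by apply: INR_pos.
  have : (0 < INR n.+1)%R by apply: INR_pos.
  move=> h; field; lra.
move=> eps heps; have [N hN] := hL1 eps heps.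
exists N => n hn; rewrite eq /R_dist.
have := hN n hn; rewrite /R_dist.
by have -> : (bb n.+1 / INR n.+1 - ln (INR (res_deg m phi)) - (L - ln (INR (res_deg m phi))) =
   bb n.+1 / INR n.+1 - L)%R by ring.
Qed.
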